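(* Consider the two-party spatial voting game with abstention described in the context, and suppose that the set of active voters is the same at every pair of distinct platforms, i.e. there is a set $W\subseteq V$ such that for all $s,t\in X$ with $s\neq t$, the set of voters active at $(s,t)$ equals $W$. Then no pure-strategy Nash equilibrium $(s,t)$ exhibits mutual leapfrogging, i.e. there is no pure-strategy Nash equilibrium $(s,t)$ with $t<\tau_A<\tau_B<s$.
   Context: Policy space: $X=\{x_j : j\in I\}$ where $I\subseteq\mathbb Z$ is an interval of integers and $x_j<x_{j+1}$; $X$ is linearly ordered by $<$. Parties: two parties $A$ and $B$ with ideal points $\tau_A=x_p$ and $\tau_B=x_q$, where $p<q$. Each party $i\in\{A,B\}$ has a weak preference order $\succeq_i$ on $X$ with unique ideal (most preferred) point $\tau_i$; $x\succ_i y$ means $x\succeq_i y$ and not $y\succeq_i x$. Voters: a finite electorate $V$. Each voter $v\in V$ has an ideal point $\theta_v\in X$, strict preferences over $X$ that are single-peaked with peak $\theta_v$ (if $x_a<x_b\le\theta_v$ then $x_b$ is strictly preferred to $x_a$, and if $\theta_v\le x_b<x_a$ then $x_b$ is strictly preferred to $x_a$), and an attraction interval $A_v\subseteq X$, an interval of the order on $X$ containing $\theta_v$. Election: party $A$ chooses $s\in X$, party $B$ chooses $t\in X$. Voter $v$ is active at $(s,t)$ if $s\in A_v$ or $t\in A_v$. An active voter votes for the platform she strictly prefers and abstains if indifferent (in particular if $s=t$); inactive voters abstain. $N_A(s,t)$ (resp. $N_B(s,t)$) is the number of active voters strictly preferring $s$ to $t$ (resp. $t$ to $s$). The outcome $g(s,t)$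 is $A$ if $N_A>N_B$, $B$ if $N_B>N_A$, and $T$ (tie) if equal. Party objectives (lexicographic): Win $\succ$ Tie $\succ$ Lose for each party (outcome $A$ is a win for $A$ and a loss for $B$, and vice versa); between profiles with the same electoral outcome, $A$ weakly prefers $(s,t)$ to $(s',t')$ iff $s\succeq_A s'$, and $B$ iff $t\succeq_B t'$. A pure-strategy Nash equilibrium is a profile at which neither party has a strictly preferred unilateral deviation. *)

(* Defs.v *)
From mathcomp Require Import all_boot all_order all_algebra.
Set Implicit Arguments. Unset Strict Implicit. Unset Printing Implicit Defensive.
Import Order.TTheory GRing.Theory Num.Theory.
Local Open Scope ring_scope.

(* Policies x_j are represented by their indices j : int; the index set I
   is an interval of integers (given as a boolean predicate).  Since
   x_j < x_{j+1}, the order on X coincides with the order on indices. *)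

Definition int_interval (I : int -> bool) : Prop :=
  forall a b c, I a -> I c -> a <= b -> b <= c -> I b.

Definition sub_interval (I A : int -> bool) : Prop :=
  (forall j, A j -> I j) /\ int_interval A.

Definition strict_total_on (I : int -> bool) (P : int -> int -> bool) : Prop :=
  [/\ (forall x, I x -> ~~ P x x),
      (forall x y z, I x -> I y -> I z -> P x y -> P y z -> P x z) &
      (forall x y, I x -> I y -> x != y -> P x y || P y x)].

Definition single_peaked (I : int -> bool) (P : int -> int -> bool) (th : int) : Prop :=
  forall a b, I a -> I b ->
    ((a < b) && (b <= th) -> P b a) /\ ((th <= b) && (b < a) -> P b a).

(* R x y : x is weakly preferred to y (x ⪰ y): complete and transitive on X. *)
Definition weak_order_on (I : int -> bool) (R : int -> int -> bool) : Prop :=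
  (forall x y, I x -> I y -> R x y || R y x) /\
  (forall x y z, I x -> I y -> I z -> R x y -> R y z -> R x z).

Definition strict_of (R : int -> int -> bool) (x y : int) : bool :=
  R x y && ~~ R y x.

Definition unique_ideal (I : int -> bool) (R : int -> int -> bool) (tau : int) : Prop :=
  I tau /\ (forall x, I x -> x != tau -> strict_of R tau x).

Record game (V : finType) := Game {
  polI : int -> bool;
  theta : V -> int;
  vpref : V -> int -> int -> bool;    (* vpref v x y : v strictly prefers x to y *)
  attr : V -> int -> bool;
  tauA : int; tauB : int;
  prefA : int -> int -> bool;
  prefB : int -> int -> bool
}.

Definition wf_game (V : finType) (G : game V) : Prop :=
  int_interval (polI G) /\
  (forall v, polI G (theta G v)) /\
  (forall v, strict_total_on (polI G) (vpref G v)) /\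
  (forall v, single_peaked (polI G) (vpref G v) (theta G v)) /\
  (forall v, sub_interval (polI G) (attr G v) /\ attr G v (theta G v)) /\
  (weak_order_on (polI G) (prefA G) /\ unique_ideal (polI G) (prefA G) (tauA G)) /\
  (weak_order_on (polI G) (prefB G) /\ unique_ideal (polI G) (prefB G) (tauB G)) /\
  tauA G < tauB G.

Section Game.
Variables (V : finType) (G : game V).

Definition active (v : V) (s t : int) : bool := attr G v s || attr G v t.

Definition NA (s t : int) : nat := #|[set v : V | active v s t && vpref G v s t]|.
Definition NB (s t : int) : nat := #|[set v : V | active v s t && vpref G v t s]|.

Inductive outcome := OA | OB | OT.

Definition g (s t : int) : outcome :=
  if (NB s t < NA s t)%N then OA else if (NA s t < NB s t)%N then OB else OT.

Definition rankA (o : outcome) : nat := match o with OA => 2 | OT => 1 | OB => 0 end.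
Definition rankB (o : outcome) : nat := match o with OB => 2 | OT => 1 | OA => 0 end.

Definition A_strictly_prefers (s' t' s t : int) : Prop :=
  (rankA (g s t) < rankA (g s' t'))%N \/
  (rankA (g s' t') = rankA (g s t) /\ strict_of (prefA G) s' s).

Definition B_strictly_prefers (s' t' s t : int) : Prop :=
  (rankB (g s t) < rankB (g s' t'))%N \/
  (rankB (g s' t') = rankB (g s t) /\ strict_of (prefB G) t' t).

Definition nash (s t : int) : Prop :=
  [/\ polI G s, polI G t,
      (forall s', polI G s' -> ~ A_strictly_prefers s' t s t) &
      (forall t', polI G t' -> ~ B_strictly_prefers s t' s t)].

End Game.

(* Main.v *)
Require Import Defs.
From mathcomp Require Import all_boot all_order all_algebra.
Import Order.TTheory GRing.Theory Num.Theory.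
Local Open Scope ring_scope.

Theorem proposition2 (V : finType) (G : game V) :
  wf_game G ->
  (exists W : {set V}, forall s t, polI G s -> polI G t -> s != t ->
      forall v : V, active G v s t = (v \in W)) ->
  ~ (exists s t, nash G s t /\ t < tauA G /\ tauA G < tauB G /\ tauB G < s).
Proof.
move=> [_ [_ [Hstr [Hsp [_ [[_ [IA uA]] [[_ [IB uB]] _]]]]]]] [W hW].
move=> [s [t [[Is It NAs NBs] [htA [hAB hBs]]]]].
have irr v x : polI G x -> vpref G v x x = false.
  by move=> Ix; case: (Hstr v) => H _ _; apply/negbTE/H.
have gxx x : polI G x -> g G x x = OT.
  move=> Ix; have E : forall y, polI G y -> NA G y y = 0%N /\ NB G y y = 0%N.
    move=> y Iy; rewrite /NA /NB.
    have -> : [set v | active G v y y && vpref G v y y] = set0.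
      by apply/setP=> v; rewrite !inE irr // andbF.
    by rewrite cards0.
  by rewrite /g; case: (E x Ix) => -> ->.
have gst : g G s t = OT.
  case E: (g G s t) => //.
  - exfalso; apply: (NBs s Is); left; rewrite gxx //= E //.
  - exfalso; apply: (NAs t It); left; rewrite gxx //= E //.
have stA : strict_of (prefA G) (tauA G) s.
  apply: uA => //; rewrite neq_lt; apply/orP; right.
  exact: lt_trans hAB hBs.
have stB : strict_of (prefB G) (tauB G) t.
  apply: uB => //; rewrite neq_lt; apply/orP; left.
  exact: lt_trans htA hAB.
have g1 : g G (tauA G) t = OB.
  case E: (g G (tauA G) t) => //; exfalso; apply: (NAs _ IA).
  - by left; rewrite E gst.
  - by right; rewrite E gst.
have g2 : g G s (tauB G) = OA.
  case E: (g G s (tauB G)) => //; exfalso; apply: (NBs _ IB).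
  - by left; rewrite E gst.
  - by right; rewrite E gst.
have l1 : (NA G (tauA G) t < NB G (tauA G) t)%N.
  move: g1; rewrite /g; case: ltnP => //; case: ltnP => //.
have l2 : (NB G s (tauB G) < NA G s (tauB G))%N.
  move: g2; rewrite /g; case: ltnP => // _; case: ltnP => //.
have ntA : tauA G != t by rewrite gt_eqF.
have nsB : s != tauB G by rewrite gt_eqF.
have asym v x y : polI G x -> polI G y -> vpref G v x y -> vpref G v y x -> False.
  move=> Ix Iy h1 h2; case: (Hstr v) => _ T _.
  by move: (T _ _ _ Ix Iy Ix h1 h2); rewrite irr.
set L := [set v in W | theta G v < tauA G].
set R := [set v in W | tauB G < theta G v].
set GA := [set v in W | tauA G <= theta G v].
set LB := [set v in W | theta G v <= tauB G].
have c1 : (NB G (tauA G) t <= #|L|)%N.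
  apply: subset_leq_card; apply/subsetP => v; rewrite !inE hW // => /andP[vW h].
  rewrite vW /=; rewrite ltNge; apply/negP => hle.
  have := (proj1 (Hsp v _ _ It IA)); rewrite htA hle => /(_ isT) h'.
  exact: (asym v _ _ It IA h h').
have c2 : (#|GA| <= NA G (tauA G) t)%N.
  apply: subset_leq_card; apply/subsetP => v; rewrite !inE hW // => /andP[vW h].
  rewrite vW /=.
  by have := (proj1 (Hsp v _ _ It IA)); rewrite htA h => /(_ isT).
have c3 : (#|R| <= #|GA|)%N.
  apply: subset_leq_card; apply/subsetP => v; rewrite !inE => /andP[-> h] /=.
  exact: ltW (lt_trans hAB h).
have c4 : (NA G s (tauB G) <= #|R|)%N.
  apply: subset_leq_card; apply/subsetP => v; rewrite !inE hW // => /andP[vW h].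
  rewrite vW /=; rewrite ltNge; apply/negP => hle.
  have := (proj2 (Hsp v _ _ Is IB)); rewrite hBs hle => /(_ isT) h'.
  exact: (asym v _ _ Is IB h h').
have c5 : (#|LB| <= NB G s (tauB G))%N.
  apply: subset_leq_card; apply/subsetP => v; rewrite !inE hW // => /andP[vW h].
  rewrite vW /=.
  by have := (proj2 (Hsp v _ _ Is IB)); rewrite hBs h => /(_ isT).
have c6 : (#|L| <= #|LB|)%N.
  apply: subset_leq_card; apply/subsetP => v; rewrite !inE => /andP[-> h] /=.
  exact: ltW (lt_trans h hAB).
have : (#|L| < #|L|)%N.
  apply: (leq_ltn_trans c6); apply: (leq_ltn_trans c5).
  apply: (leq_trans l2); apply: (leq_trans c4); apply: (leq_trans c3).
  apply: (leq_trans c2); exact: ltnW (leq_trans l1 c1).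
by rewrite ltnn.
Qed.
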